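(* Let $M\ge\frac52$, $\mu=\frac{2}{2M+3}$, and consider Algorithm A run on an input whose optimal offline makespan is $1$. Then for every $j\ge1$, the load of $m_1$ just after job $j$ has been handled is at most $1+\mu$.
   Context: Model (two hierarchical machines with migration, bin stretching). Jobs $1,2,\dots,n$ arrive one by one ($n$ unknown in advance). Job $j$ has a size $p_j>0$ and a grade of service (GoS) $g_j\in\{1,2\}$; a job of GoS $1$ may only be processed on machine $m_1$, a job of GoS $2$ may be processed on $m_1$ or on $m_2$. The load of a machine is the total size of the jobs assigned to it, and the makespan is the maximum load. When job $j$ arrives, the algorithm must assign it to a machine, and at the same time it may reassign (migrate) previously arrived jobs to other machines (respecting the GoS constraints), provided that the total size of the migrated jobs is at most $M\cdot p_j$; $M\ge 0$ is the migration factor. Bin stretching: the optimal offline makespan of the complete input is known in advance and scaled to $1$. Notation: $Y_{j}$ is the set of jobs on $m_2$ just after job $j$ has been handled (including migrations), $y_j$ its total size, $y_0=0$. $Z$ denotes the set of GoS-2 jobs currently on $m_1$. Algorithm A (with $\mu=\frac{2}{2M+3}$). On arrival of job $j$: (i) if $g_j=1$ or $y_{j-1}\ge 1-\mu$, assign $j$ to $m_1$; (ii) else if $y_{j-1}+p_j\le 1+\mu$, assign $j$ to $m_2$; (iii) otherwise, among all GoS-2 jobs arrived so far (the current $Z$, the current $Y_{j-1}$, and $j$), choose a subset $W$ of maximum total size subject to total size at most $1$; rearrange so that exactly the jobs of $W$ are on $m_2$ and all other arrived jobs are on $m_1$. *)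

(* Defs.v *)
From HB Require Import structures.
From mathcomp Require Import all_boot all_order all_algebra.
Set Implicit Arguments. Unset Strict Implicit. Unset Printing Implicit Defensive.
Import Order.TTheory GRing.Theory Num.Theory.
Local Open Scope ring_scope.

(* Jobs are indexed by 'I_n (0-indexed: job i of Rocq = job i+1 of the paper).
   p i : size, g i : grade of service (1 or 2).
   A set of jobs A : {set 'I_n} describes the jobs placed on machine m_2;
   all other (arrived) jobs are on m_1. *)

Section Defs.
Variables (R : realFieldType) (n : nat).

Definition setsum (p : 'I_n -> R) (A : {set 'I_n}) : R := \sum_(i in A) p i.

Definition feasible (g : 'I_n -> nat) (A : {set 'I_n}) : Prop :=
  A \subset [set i | g i == 2%N].

Definition makespan (p : 'I_n -> R) (A : {set 'I_n}) : R :=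
  Num.max (setsum p (~: A)) (setsum p A).

Definition opt_makespan_is (p : 'I_n -> R) (g : 'I_n -> nat) (v : R) : Prop :=
  (exists A, feasible g A /\ makespan p A <= v) /\
  (forall A, feasible g A -> v <= makespan p A).

(* One step of Algorithm A handling job j: Yprev = Y_{j-1}, Ynext = Y_j. *)
Definition algA_step (mu : R) (p : 'I_n -> R) (g : 'I_n -> nat) (j : 'I_n)
    (Yprev Ynext : {set 'I_n}) : Prop :=
  let y := setsum p Yprev in
  if (g j == 1%N) || (1 - mu <= y) then Ynext = Yprev
  else if y + p j <= 1 + mu then Ynext = j |: Yprev
  else
    let C := [set i : 'I_n | (i <= j)%N && (g i == 2%N)] in
    [/\ Ynext \subset C, setsum p Ynext <= 1 &
        forall W : {set 'I_n}, W \subset C -> setsum p W <= 1 -> setsum p W <= setsum p Ynext].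

(* A run of Algorithm A (any tie-breaking in step (iii)):
   Y k = set of jobs on m_2 after the first k jobs have been handled. *)
Definition algA_run (mu : R) (p : 'I_n -> R) (g : 'I_n -> nat)
    (Y : nat -> {set 'I_n}) : Prop :=
  Y 0%N = set0 /\ forall j : 'I_n, algA_step mu p g j (Y j) (Y j.+1).

Definition load1_after (p : 'I_n -> R) (Y : nat -> {set 'I_n}) (j : 'I_n) : R :=
  \sum_(i : 'I_n | (i <= j)%N && (i \notin Y j.+1)) p i.

End Defs.

(* Main.v *)
Require Import Defs.
From HB Require Import structures.
From mathcomp Require Import all_boot all_order all_algebra.
From mathcomp Require Import lra.
Import Order.TTheory GRing.Theory Num.Theory.
Local Open Scope ring_scope.

Section Aux.
Variables (R : realFieldType) (n : nat) (p : 'I_n -> R).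
Hypothesis p0 : forall i, 0 <= p i.

Lemma ss_split (D B : {set 'I_n}) :
  setsum p D = setsum p (D :&: B) + setsum p (D :\: B).
Proof. by rewrite /setsum (big_setID B). Qed.

Lemma ss_ge0 (D : {set 'I_n}) : 0 <= setsum p D.
Proof. by apply: sumr_ge0 => i _. Qed.

Lemma ss_sub (A B : {set 'I_n}) : A \subset B -> setsum p A <= setsum p B.
Proof.
move=> sAB; rewrite (ss_split B A) (setIidPr sAB) lerDl; exact: ss_ge0.
Qed.

Lemma ss_U (A B : {set 'I_n}) : setsum p (A :|: B) <= setsum p A + setsum p B.
Proof.
rewrite (ss_split (A :|: B) A) (setIidPr (subsetUl A B)) lerD2l.
apply: ss_sub; apply/subsetP => i; rewrite !inE.
by case: (i \in A); case: (i \in B).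
Qed.
End Aux.
Arguments ss_split {R n} p D B.
Arguments ss_sub {R n p} p0 {A B}.
Arguments ss_U {R n p}.
Arguments ss_ge0 {R n p}.


Theorem mainTheorem3 (R : realFieldType) (M : R) (n : nat)
    (p : 'I_n -> R) (g : 'I_n -> nat) (Y : nat -> {set 'I_n}) :
  5 / 2 <= M ->
  (forall i, 0 < p i) ->
  (forall i, g i = 1%N \/ g i = 2%N) ->
  opt_makespan_is p g 1 ->
  algA_run (2 / (2 * M + 3)) p g Y ->
  forall j : 'I_n, load1_after p Y j <= 1 + 2 / (2 * M + 3).
Proof.
move=> HM pp gg [[A [fA mA]] _] [Y0 Hstep].
set mu := 2 / (2 * M + 3).
have mu0 : 0 < mu by rewrite /mu divr_gt0 //; lra.
have p0 : forall i, 0 <= p i by move=> i; exact: ltW.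
have [mA1 mA2] : setsum p (~: A) <= 1 /\ setsum p A <= 1.
  by move: mA; rewrite /makespan ge_max => /andP[-> ->].
set L := fun k : nat => [set i : 'I_n | (i < k)%N].
set T1 := [set i : 'I_n | g i == 1%N].
set T2 := [set i : 'I_n | g i == 2%N].
set z := fun k => setsum p ((L k :&: T2) :\: Y k).
set G1 := setsum p T1.
have T1A : T1 \subset ~: A.
  apply/subsetP => i; rewrite !inE; move/eqP=> gi; apply/negP => iA.
  by move/subsetP: fA => /(_ i iA); rewrite inE gi.
have inv : forall k, (k <= n)%N -> Y k \subset L k /\
    (1 - mu <= setsum p (Y k) \/ z k + G1 <= 1).
  elim=> [_|k IH kn].
    rewrite Y0 sub0set; split=> //; right.
    rewrite /z Y0 setD0 /=.
    have -> : L 0%N :&: T2 = set0 by apply/setP=> i; rewrite !inE.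
    rewrite /setsum big_set0 add0r /G1.
    apply: le_trans mA1. exact: (ss_sub p0 T1A).
  have kn' : (k < n)%N by [].
  have [sY H] := IH (ltnW kn).
  have LS : L k \subset L k.+1.
    by apply/subsetP=> i; rewrite !inE => /ltnW; rewrite ltnS.
  have := Hstep (Ordinal kn'); rewrite /algA_step /=.
  case: ifP => [/orP C1 /= YE|/negbT]. rewrite YE.
    split; first exact: subset_trans LS.
    case: C1 => [/eqP gk|yk]; last by left.
    case: H => [H|H]; first by left.
    right; rewrite /z /= YE; apply: le_trans H; rewrite lerD2r; apply: (ss_sub p0).
    apply/subsetP=> i; rewrite !inE ltnS leq_eqVlt.
    case/and3P => iY /orP[/eqP ik|->] gi; last by rewrite iY gi.
    have iE : i = Ordinal kn' by apply: val_inj.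
    by move: gi; rewrite iE gk.
  rewrite negb_or => /andP[gk1 yk].
  have gk2 : g (Ordinal kn') = 2%N.
    by case: (gg (Ordinal kn')) => // e; move: gk1; rewrite e.
  case: ifP => _.
    move=> /= YE; rewrite YE; split.
      rewrite subUset sub1set !inE ltnS leqnn /=.
      exact: subset_trans LS.
    case: H => [H|H]; first by move: yk; rewrite H.
    right; rewrite /z /= YE; apply: le_trans H; rewrite lerD2r; apply: (ss_sub p0).
    apply/subsetP=> i; rewrite !inE ltnS leq_eqVlt.
    rewrite negb_or; case/and3P => /andP[ik0 iY] /orP[/eqP ik|->] gi; last by rewrite iY gi.
    have iE : i = Ordinal kn' by apply: val_inj.
    by move: ik0; rewrite iE eqxx.
  set C := [set i : 'I_n | _].
  case=> sYC yle Wmax.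
  have CE : C = L k.+1 :&: T2 by apply/setP=> i; rewrite !inE.
  split.
    by apply: subset_trans sYC _; rewrite CE subsetIl.
  right.
  have WA : setsum p (C :&: A) <= setsum p (Y k.+1).
    apply: Wmax; first exact: subsetIl.
    apply: le_trans mA2; apply: (ss_sub p0); exact: subsetIr.
  have zE : z k.+1 + setsum p (Y k.+1) = setsum p C.
    rewrite /z -CE (ss_split p C (Y k.+1)) (setIidPr sYC) addrC //.
  have CA : setsum p C = setsum p (C :&: A) + setsum p (C :\: A)
    by exact: ss_split.
  have T1CA : G1 + setsum p (C :\: A) <= 1.
    apply: le_trans mA1.
    rewrite (ss_split p (~: A) T1) (setIidPr T1A) lerD2l.
    apply: (ss_sub p0); apply/subsetP=> i; rewrite !inE => /andP[iA].
    rewrite iA andbT => /andP[_ /eqP ->] //.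
  lra.
move=> j.
have [sY H] := inv j.+1 (ltn_ord j).
have LE : load1_after p Y j = setsum p (L j.+1 :\: Y j.+1).
  by rewrite /load1_after /setsum; apply: eq_bigl => i; rewrite !inE ltnS andbC.
rewrite LE.
case: H => H.
  have tot : setsum p (L j.+1) <= 2.
    apply: (@le_trans _ _ (setsum p [set: 'I_n])); first exact: (ss_sub p0) (subsetT _).
    rewrite (ss_split p [set: 'I_n] A) setTI setTD; lra.
  have : setsum p (L j.+1) = setsum p (Y j.+1) + setsum p (L j.+1 :\: Y j.+1).
    by rewrite (ss_split p _ (Y j.+1)) (setIidPr sY).
  lra.
apply: (@le_trans _ _ 1); last lra.
apply: le_trans H.
rewrite addrC; apply: le_trans (ss_U p0 _ _).
apply: (ss_sub p0); apply/subsetP=> i; rewrite !inE => /andP[iY ij].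
by case: (gg i) => ->; rewrite ?eqxx ?ij ?iY.
Qed.
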